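(* Let $\Lambda=(\lambda_{ij})$ be the transition intensity matrix of an ergodic continuous-time Markov chain on $\mathbb{S}=\{a_1,\dots,a_d\}$ (distinct points). Let $N_s$ be a $d\times d$ matrix-valued process whose off-diagonal entries $N^{ij}_s$, $i\ne j$, are independent Poisson processes with intensities $\lambda_{ij}$, and whose diagonal entries are $N^{ii}_s=-\sum_{j\ne i}N^{ij}_s$. Let $\eta_0$ and $\tilde\eta_0$ be random vectors with values in the standard basis $\{e_1,\dots,e_d\}$ of $\mathbb{R}^d$, independent of each other and of $N$, and let $\eta,\tilde\eta$ be the solutions of the Itô equations $$\eta_t=\eta_0+\int_0^t dN_s^*\,\eta_{s-},\qquad \tilde\eta_t=\tilde\eta_0+\int_0^t dN_s^*\,\tilde\eta_{s-}$$ (driven by the same $N$). Set $X_t=\sum_{i=1}^d a_i\eta_t(i)$, $\tilde X_t=\sum_{i=1}^d a_i\tilde\eta_t(i)$ and $\tau=\inf\{t\ge0: X_t=\tilde X_t\}$ (with $\inf\emptyset=\infty$). Then almost surely $\lim_{n\to\infty}\mathbf{1}\{\tau\ge n\}=0$.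
   Context: A continuous-time Markov chain with intensity matrix $\Lambda$ is ergodic if the limits $\mu_i=\lim_{t\to\infty}\mathsf{P}(X_t=a_i)$ exist, are strictly positive and are independent of the initial distribution. Under the construction above, $\eta_t$ stays in the standard basis and $X$, $\tilde X$ are Markov chains with intensity matrix $\Lambda$. *)

(* Defs.v *)
From HB Require Import structures.
From mathcomp Require Import all_boot all_order all_algebra.
From mathcomp Require Import all_classical all_reals all_analysis.
Set Implicit Arguments. Unset Strict Implicit. Unset Printing Implicit Defensive.
Import Order.TTheory GRing.Theory Num.Theory.
Import numFieldNormedType.Exports.
Local Open Scope classical_set_scope.
Local Open Scope ring_scope.

Definition intensity_matrix (R : realType) (d : nat) (L : 'M[R]_d) : Prop :=
  (forall i j : 'I_d, i != j -> 0 <= L i j) /\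
  (forall i : 'I_d, L i i = - \sum_(j < d | j != i) L i j).

(* Entry (i,j) of the transition matrix P(t) = exp(t L) of the chain with
   intensity matrix L, i.e. P(X_t = a_j | X_0 = a_i). *)
Definition trans_entry (R : realType) (d : nat) (L : 'M[R]_d) (t : R)
    (i j : 'I_d) : R :=
  lim ((fun m : nat => \sum_(k < m) (t ^+ k / (k`!)%:R) * (L ^+ k) i j) @ \oo).

(* Ergodicity: lim_{t->oo} P(X_t = a_j) = mu_j > 0, independently of the
   initial distribution, i.e. every row of P(t) converges to the same mu > 0. *)
Definition ergodic_intensity (R : realType) (d : nat) (L : 'M[R]_d) : Prop :=
  exists mu : 'I_d -> R, (forall j, 0 < mu j) /\
    forall i j : 'I_d, trans_entry L t i j @[t --> +oo] --> mu j.

Definition poisson_process (R : realType) (dm : measure_display)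
    (Omega : measurableType dm) (P : probability Omega R) (lam : R)
    (N : R -> Omega -> R) : Prop :=
  (forall t, measurable_fun setT (N t)) /\
  [/\ forall w, N 0 w = 0,
      forall w s t, 0 <= s -> s <= t -> N s w <= N t w,
      forall w t, 0 <= t -> (exists n : nat, N t w = n%:R),
      forall w t, 0 <= t -> (N x w @[x --> t^'+] --> N t w) &
      forall s t (k : nat), 0 <= s -> s <= t ->
        P [set w | N t w - N s w = k%:R] =
        (expR (- (lam * (t - s))) * (lam * (t - s)) ^+ k / (k`!)%:R)%:E ].

Definition preim_class (Omega T : Type) (X : Omega -> T) (M : set (set T))
  : set (set Omega) := [set X @^-1` B | B in M].

(* Mutual independence of a finite family of classes of events (product rule;
   all classes used below contain setT, so subfamilies are covered). *)
Definition indep_classes (R : realType) (dm : measure_display)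
    (Omega : measurableType dm) (P : probability Omega R) (I : finType)
    (C : I -> set (set Omega)) : Prop :=
  forall E : I -> set Omega, (forall i, C i (E i)) ->
    fine (P (\bigcap_i E i)) = \prod_(i : I) fine (P (E i)).

(* This encodes: the N^{ij} (i<>j) are independent
   processes with independent increments, and eta0, eta0' are independent of
   each other and of N. *)
Definition joint_indep (R : realType) (dm : measure_display)
    (Omega : measurableType dm) (P : probability Omega R) (d : nat)
    (N : 'I_d -> 'I_d -> R -> Omega -> R) (eta0 eta0' : Omega -> 'I_d) : Prop :=
  forall (n : nat) (t : nat -> R), 0 <= t 0%N -> (forall k, t k <= t k.+1) ->
    indep_classes P (fun x : ('I_d * 'I_d * 'I_n) + bool =>
      match x with
      | inl (i, j, k) =>
          if i == j then [set setT]
          else preim_class (fun w => N i j (t k.+1) w - N i j (t k) w)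
                 [set B : set R | measurable B]
      | inr false => preim_class eta0 setT
      | inr true => preim_class eta0' setT
      end).

(* Left-point Riemann(-Ito) sums on the uniform grid of mesh t/m for the
   j-th component of  int_0^t dN_s^* eta_{s-}  =  sum_i int_0^t eta_{s-}(i) dN^{ij}_s. *)
Definition ito_sum (R : realType) (Omega : Type) (d : nat)
    (N : 'I_d -> 'I_d -> R -> Omega -> R) (eta : R -> Omega -> 'I_d -> R)
    (t : R) (w : Omega) (j : 'I_d) (m : nat) : R :=
  \sum_(k < m) \sum_(i < d)
     eta (k%:R * t / m%:R) w i *
       (N i j ((k.+1)%:R * t / m%:R) w - N i j (k%:R * t / m%:R) w).

(* eta solves  eta_t = eta_0 + int_0^t dN_s^* eta_{s-}  (a.s., for all t >= 0),
   where eta_0 = e_{eta0} is the standard basis vector indexed by eta0. *)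
Definition solves_ito (R : realType) (dm : measure_display)
    (Omega : measurableType dm) (P : probability Omega R) (d : nat)
    (N : 'I_d -> 'I_d -> R -> Omega -> R) (eta0 : Omega -> 'I_d)
    (eta : R -> Omega -> 'I_d -> R) : Prop :=
  {ae P, forall w, forall t, 0 <= t -> forall j : 'I_d,
     ito_sum N eta t w j m @[m --> \oo] --> eta t w j - (eta0 w == j)%:R}.

Definition state_proc (R : realType) (Omega : Type) (d : nat) (a : 'I_d -> R)
    (eta : R -> Omega -> 'I_d -> R) (t : R) (w : Omega) : R :=
  \sum_(i < d) a i * eta t w i.

Definition meet_time (R : realType) (Omega : Type) (X X' : R -> Omega -> R)
    (w : Omega) : \bar R :=
  ereal_inf [set t%:E | t in [set t : R | 0 <= t /\ X t w = X' t w]].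

(* Main.v *)
Require Import Defs.
From HB Require Import structures.
From mathcomp Require Import all_boot all_order all_algebra.
From mathcomp Require Import all_classical all_reals all_analysis.
From mathcomp Require Import ring measurable_realfun.
Import Order.TTheory GRing.Theory Num.Theory.
Import numFieldNormedType.Exports.
Local Open Scope classical_set_scope.
Local Open Scope ring_scope.
Set Implicit Arguments. Unset Strict Implicit. Unset Printing Implicit Defensive.


Section Comb.
Context (R : realType) (d : nat) (L : 'M[R]_d).

Inductive reach : 'I_d -> 'I_d -> Prop :=
| reach_refl x : reach x x
| reach_step x y z : x != y -> 0 < L x y -> reach y z -> reach x z.

Lemma reach_snoc x y z : reach x y -> y != z -> 0 < L y z -> reach x z.
Proof.
elim=> [u|u v w huv hL _ IH] hyz hL'.
- exact: reach_step hyz hL' (reach_refl z).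
- exact: reach_step huv hL (IH hyz hL').
Qed.

Lemma not_reach_pow (HL : forall i j, i != j -> 0 <= L i j) x y :
  ~ reach x y -> forall k, (L ^+ k) x y = 0.
Proof.
move=> nr k; elim: k y nr => [|k IH] y nr.
- rewrite expr0 mxE; case: eqP => // e; subst.
  by case: nr; constructor.
- rewrite exprSr -mulmxE mxE big1 // => z _.
  case: (pselect (reach x z)) => rz; last by rewrite IH // mul0r.
  case: (eqVneq z y) => [ezy|nzy].
    by subst; exfalso; exact: nr rz.
  have := HL _ _ nzy; rewrite le_eqVlt => /orP [/eqP<-|lt]; first by rewrite mulr0.
  by exfalso; apply: nr; exact: reach_snoc rz nzy lt.
Qed.

Lemma ergodic_reach : intensity_matrix L -> ergodic_intensity L ->
  forall x y, reach x y.
Proof.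
move=> [HL _] [mu [mupos cv]] x y; apply: contrapT => nr.
have h0 : forall t, trans_entry L t x y = 0.
  move=> t; rewrite /trans_entry.
  have -> : (fun m : nat => \sum_(k < m) (t ^+ k / (k`!)%:R) * (L ^+ k) x y)
     = (fun=> 0).
    apply: funext => m; rewrite big1 // => k _.
    by rewrite (not_reach_pow HL nr) mulr0.
  exact: lim_cst.
have c0 : trans_entry L t x y @[t --> +oo] --> (0:R).
  have -> : (fun t => trans_entry L t x y) = (fun=> 0) by apply: funext => t; rewrite h0.
  exact: cvg_cst.
have := cvg_unique _ (cv x y) c0.
by move=> /(_ _) e; move: (mupos y); rewrite e ?ltxx.
Qed.

Definition stepe (e : 'I_d * 'I_d) (x : 'I_d) := if x == e.1 then e.2 else x.
Fixpoint sig (q : seq ('I_d * 'I_d)) x := if q is e :: q' then sig q' (stepe e x) else x.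
Definition goode (e : 'I_d * 'I_d) := (e.1 != e.2) && (0 < L e.1 e.2).

Lemma sig_cat q1 q2 x : sig (q1 ++ q2) x = sig q2 (sig q1 x).
Proof. by elim: q1 x => //= e q IH x; rewrite IH. Qed.

Lemma merge x y : reach x y -> exists q, all goode q /\ sig q x = sig q y.
Proof.
elim=> [u|u v w huv hL _ [q [gq hq]]]; first by exists [::].
case: (eqVneq w u) => [->|nwu]; first by exists [::].
exists ((u,v)::q); split; first by rewrite /= /goode huv hL gq.
by rewrite /= /stepe /= eqxx (negbTE nwu).
Qed.

Lemma coalesce (hr : forall x y, reach x y) (xs : seq 'I_d) :
  exists q, all goode q /\ forall x y, x \in xs -> y \in xs -> sig q x = sig q y.
Proof.
elim: xs => [|x xs [q [gq hq]]]; first by exists [::].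
case: xs hq => [|y0 xs] hq.
  by exists [::]; split=> // u v; rewrite !inE => /eqP-> /eqP->.
have [q2 [g2 h2]] := merge (hr (sig q x) (sig q y0)).
exists (q ++ q2); split; first by rewrite all_cat gq g2.
have key : forall u, u \in [:: x, y0 & xs] -> sig (q ++ q2) u = sig q2 (sig q y0).
  move=> u; rewrite inE => /orP[/eqP->|uin]; rewrite sig_cat ?h2 //.
  by rewrite (hq u y0) // inE eqxx.
by move=> u v hu hv; rewrite !key.
Qed.

End Comb.


Section Prob.
Context (R : realType) (dm : measure_display) (Omega : measurableType dm)
  (P : probability Omega R) (d : nat) (L : 'M[R]_d)
  (N : 'I_d -> 'I_d -> R -> Omega -> R) (eta0 eta0' : Omega -> 'I_d)
  (q : seq ('I_d * 'I_d)).
Hypothesis hpois : forall a c, a != c -> poisson_process P (L a c) (N a c).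
Hypothesis hind : joint_indep P N eta0 eta0'.
Hypothesis hq : all (goode L) q.

Definition pat (j : nat) (a c : 'I_d) : nat := ((a, c) == nth (a, a) q j).
Definition ev (k : nat) (a c : 'I_d) : set Omega :=
  [set w | N a c (k.+1)%:R w - N a c k%:R w = (pat (k %% size q)%N a c)%:R].
Definition G (b : nat) : set Omega :=
  [set w | forall j, (j < size q)%N -> forall a c, a != c -> ev (b * size q + j) a c w].
Definition pf (lam : R) (k : nat) : R := expR (- lam) * lam ^+ k / (k`!)%:R.
Definition Q (j : nat) : R := \prod_(ac : 'I_d * 'I_d)
  (if ac.1 == ac.2 then 1 else pf (L ac.1 ac.2) (pat j ac.1 ac.2)).
Definition del : R := \prod_(j < size q) Q j.

Lemma mpre (f : Omega -> R) B : measurable_fun setT f -> measurable B ->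
  measurable (f @^-1` B).
Proof. by move=> mf mB; rewrite -[f @^-1` B]setTI; exact: mf. Qed.

Lemma mincr a c s t : a != c -> measurable_fun setT (fun w => N a c t w - N a c s w).
Proof. move=> ac; have [mN _] := hpois ac; exact: measurable_funB. Qed.

Lemma ev_meas k a c : a != c -> measurable (ev k a c).
Proof. move=> ac; exact: (mpre (mincr _ _ ac) (measurable_set1 _)). Qed.

Lemma P_ev k a c : a != c -> P (ev k a c) = (pf (L a c) (pat (k %% size q)%N a c))%:E.
Proof.
move=> ac; have [_ [_ _ _ _ h]] := hpois ac.
rewrite /ev h ?ler0n ?ler_nat //.
have -> : ((k.+1)%:R - k%:R : R) = 1 by rewrite mulrSr addrAC subrr add0r.
by rewrite /pf !mulr1.
Qed.

Lemma Q_gt0 j : (j < size q)%N -> 0 < Q j.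
Proof.
move=> hj; apply: prodr_gt0 => [[a c]] _ /=; case: eqVneq => // ac.
rewrite /pf divr_gt0 ?ltr0n ?fact_gt0 // mulr_gt0 ?expR_gt0 //.
rewrite /pat; case: eqP => [e|_]; last by rewrite expr0.
have := (allP hq) _ (mem_nth (a, a) hj); rewrite -e /goode /= => /andP[_ h].
by rewrite expr1.
Qed.

Lemma del_gt0 : 0 < del.
Proof. by apply: prodr_gt0 => j _; apply: Q_gt0. Qed.

Lemma prod_blocks (F : nat -> R) (s : nat -> bool) K :
  \prod_(k < K * size q) (if s (k %/ size q)%N then F (k %% size q)%N else 1)
  = \prod_(b < K) (if s b then \prod_(j < size q) F j else 1).
Proof.
case: (posnP (size q)) => [->|hM].
  by rewrite muln0 big_ord0 big1 // => b _; rewrite big_ord0; case: ifP.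
elim: K => [|K IH]; first by rewrite mul0n !big_ord0.
rewrite big_ord_recr /= -IH mulSnr big_split_ord /=; congr (_ * _).
have e1 : forall i : 'I_(size q), ((K * size q + i) %/ size q)%N = K.
  by move=> i; rewrite divnMDl // divn_small // addn0.
have e2 : forall i : 'I_(size q), ((K * size q + i) %% size q)%N = i.
  by move=> i; rewrite modnMDl modn_small.
under eq_bigr do rewrite e1 e2.
by case: (s K) => //; rewrite big1.
Qed.

Lemma prod_pow (D : R) (s : nat -> bool) K :
  \prod_(b < K) (if s b then D else 1) = D ^+ (\sum_(b < K) s b).
Proof.
elim: K => [|K IH]; first by rewrite !big_ord0 expr0.
by rewrite !big_ord_recr /= IH exprD; case: (s K); rewrite ?expr1 ?expr0 ?mulr1.
Qed.

Definition X (K : nat) (s : nat -> bool) : set Omega :=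
  [set w | forall b, (b < K)%N -> s b -> G b w].

Lemma indepG K (s : nat -> bool) : P (X K s) = (del ^+ (\sum_(b < K) s b))%:E.
Proof.
have h0 : 0 <= (fun k : nat => k%:R : R) 0%N by [].
have hm : forall k, (fun k : nat => k%:R : R) k <= (fun k : nat => k%:R : R) k.+1.
  by move=> k; rewrite ler_nat.
have hI := hind h0 hm (n := K * size q).
pose E : ('I_d * 'I_d * 'I_(K * size q)) + bool -> set Omega := fun x =>
  match x with
  | inl (a, c, k) => if a == c then setT else if s (k %/ size q)%N then ev k a c else setT
  | inr _ => setT end.
have hE := hI E.
have mE : forall i, measurable (E i).
  case=> [[[a c] k]|b] //=; case: eqVneq => // ac; case: (s _) => //.
  exact: ev_meas.
have hC : forall i, (fun x : ('I_d * 'I_d * 'I_(K * size q)) + bool =>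
    match x with
    | inl (i, j, k) =>
        if i == j then [set setT]
        else preim_class (fun w => N i j ((k.+1)%:R) w - N i j (k%:R) w)
               [set B : set R | measurable B]
    | inr false => preim_class eta0 setT
    | inr true => preim_class eta0' setT
    end) i (E i).
  case=> [[[a c] k]|[]] /=.
  - case: eqVneq => // ac; case: (s _).
    + by exists [set (pat (k %% size q)%N a c)%:R]; first exact: measurable_set1.
    + by exists setT; [exact: measurableT | rewrite ?preimage_setT].
  - by exists setT => //; rewrite ?preimage_setT.
  - by exists setT => //; rewrite ?preimage_setT.
have {}hE := hE hC.
have eX : X K s = \bigcap_i E i.
  apply/seteqP; split => w /=.
  - move=> H [[[a c] k]|b] _ /=; last by [].
    case: eqVneq => // ac; case hs: (s _) => //.
    have hM : (0 < size q)%N.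
      have := ltn_ord k; move: (nat_of_ord k) => kk; case: (posnP (size q)) => // ->; by rewrite muln0.
    have bK : (k %/ size q < K)%N by rewrite ltn_divLR.
    have := H (k %/ size q)%N bK hs (k %% size q)%N (ltn_pmod k hM) a c ac.
    by rewrite -divn_eq.
  - move=> H b bK sb j jM a c ac.
    have kK : (b * size q + j < K * size q)%N.
      apply: (@leq_trans (b.+1 * size q)); first by rewrite mulSnr ltn_add2l.
      by rewrite leq_mul2r bK orbT.
    have := H (inl (a, c, Ordinal kK)) I; rewrite /= (negbTE ac).
    have e : ((b * size q + j) %/ size q)%N = b.
      by rewrite divnMDl ?divn_small ?addn0 //; exact: leq_ltn_trans jM.
    by rewrite e sb.
have mX : measurable (X K s).
  by rewrite eX; apply: fin_bigcap_measurable; [exact: finite_finset| move=> i _; exact: mE].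
rewrite -[P (X K s)]fineK ?fin_num_measure // eX hE big_sumType /=.
rewrite [X in _ * X]big1 ?mulr1; last by move=> b _; rewrite probability_setT.
rewrite (eq_bigr (fun p : (_ * _) * _ => fine (P (E (inl (p.1, p.2)))))); last by case.
rewrite -(pair_bigA _ (fun ac (k : 'I_(K * size q)) => fine (P (E (inl (ac, k)))))) /=.
rewrite exchange_big /=.
rewrite (eq_bigr (fun k : 'I_(K * size q) =>
   if s (k %/ size q)%N then Q (k %% size q)%N else 1)); last first.
  move=> k _; case hs: (s _).
  - rewrite /Q; apply: eq_bigr => [[a c]] _ /=; case: eqVneq => ac.
    + by rewrite probability_setT.
    + by rewrite P_ev.
  - by rewrite big1 // => [[a c]] _ /=; case: eqVneq => _; rewrite probability_setT.
by rewrite (prod_blocks Q s K) prod_pow.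
Qed.

Definition H (n : nat) : set Omega := [set w | forall b, (b < n)%N -> ~ G b w].

Lemma G_meas b : measurable (G b).
Proof.
have -> : G b = \bigcap_(x in [set: 'I_d * 'I_d * 'I_(size q)])
   (if x.1.1 == x.1.2 then setT else ev (b * size q + x.2) x.1.1 x.1.2).
  apply/seteqP; split => w /=.
  - move=> h [[a c] j] _ /=; case: eqVneq => // ac; exact: h.
  - move=> h j jM a c ac; have := h (a, c, Ordinal jM) I; by rewrite /= (negbTE ac).
apply: fin_bigcap_measurable; first exact: finite_finset.
move=> [[a c] j] _ /=; case: eqVneq => // ac; exact: ev_meas.
Qed.

Lemma H_meas n : measurable (H n).
Proof.
elim: n => [|n IH].
  have -> : H 0 = setT by apply/seteqP; split => w //= _ b.
  exact: measurableT.
have -> : H n.+1 = H n `&` ~` G n.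
  apply/seteqP; split => w /=.
  - move=> h; split; last by apply: h; exact: ltnSn.
    by move=> b bn; apply: h; exact: leqW.
  - move=> [h1 h2] b; rewrite ltnS leq_eqVlt => /orP[/eqP->//|]; exact: h1.
by apply: measurableI => //; apply: measurableC; apply: G_meas.
Qed.

Lemma X_meas K s : measurable (X K s).
Proof.
elim: K => [|K IH].
  have -> : X 0 s = setT by apply/seteqP; split => w //= _ b.
  exact: measurableT.
have -> : X K.+1 s = X K s `&` (if s K then G K else setT).
  apply/seteqP; split => w /=.
  - move=> h; split; first by move=> b bK; apply: h; exact: leqW.
    by case hs: (s K) => //; apply: h.
  - move=> [h1 h2] b; rewrite ltnS leq_eqVlt => /orP[/eqP->|]; last exact: h1.
    by move=> sK; move: h2; rewrite sK.
apply: measurableI => //; case: (s K) => //; exact: G_meas.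
Qed.

Lemma sum_eq1 n K : (n < K)%N -> \sum_(b < K) ((nat_of_ord b == n) : nat) = 1%N.
Proof.
elim: K => [//|K IH]; rewrite ltnS leq_eqVlt big_ord_recr /= => /orP[/eqP->|nK].
- by rewrite eqxx big1 // => b _; rewrite (ltn_eqF (ltn_ord b)).
- by rewrite IH // gtn_eqF.
Qed.

Lemma incl_excl n K (s : nat -> bool) : (n <= K)%N ->
  (forall b, (b < n)%N -> s b = false) ->
  P (H n `&` X K s) = (((1 - del) ^+ n) * del ^+ (\sum_(b < K) s b))%:E.
Proof.
elim: n K s => [|n IH] K s nK hs.
  have -> : H 0 `&` X K s = X K s.
    by apply/seteqP; split => w /=; [case|move=> h; split => // b].
  by rewrite indepG expr0 mul1r.
pose s' := fun b => (b == n) || s b.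
have eD : (H n `&` X K s) `\` G n = H n.+1 `&` X K s.
  apply/seteqP; split => w /=.
  - move=> [[h1 h2] h3]; split => // b; rewrite ltnS leq_eqVlt => /orP[/eqP->//|].
    exact: h1.
  - move=> [h1 h2]; split; last by apply: h1.
    by split => // b bn; apply: h1; exact: leqW.
have eI : (H n `&` X K s) `&` G n = H n `&` X K s'.
  apply/seteqP; split => w /=.
  - move=> [[h1 h2] h3]; split => // b bK; rewrite /s' => /orP[/eqP->//|].
    exact: h2.
  - move=> [h1 h2]; split; last by apply: h2 => //; rewrite /s' eqxx.
    by split => // b bK sb; apply: h2 => //; rewrite /s' sb orbT.
have hsum : \sum_(b < K) (s' b : nat) = (\sum_(b < K) (s b : nat) + 1)%N.
  rewrite -(sum_eq1 nK) -big_split /=; apply: eq_bigr => b _; rewrite /s'.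
  case: eqVneq => [->|_] /=; last by rewrite addn0.
  by rewrite hs.
have : P (H n `&` X K s) = (P (H n.+1 `&` X K s) + P (H n `&` X K s'))%E.
  by rewrite -eD -eI; exact: measureDI (measurableI _ _ (H_meas n) (X_meas K s)) (G_meas n).
have h1 := IH K s (ltnW nK) (fun b bn => hs b (leqW bn)).
have h2 : P (H n `&` X K s') = ((1 - del) ^+ n * del ^+ (\sum_(b < K) s' b))%:E.
  by apply: IH (ltnW nK) _ => b bn; rewrite /s' (ltn_eqF bn) hs // leqW.
rewrite h1 h2.
have mY : measurable (H n.+1 `&` X K s) by apply: measurableI; [exact: H_meas|exact: X_meas].
rewrite -[P (H n.+1 `&` X K s)]fineK ?fin_num_measure // -EFinD => -[e].
congr (_%:E); rewrite hsum exprD expr1 in e; rewrite exprS.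
set u := (1 - del) ^+ n in e *; set v := del ^+ (\sum_(i < K) s i) in e *.
have -> : fine (P (H n.+1 `&` X K s)) = u * v - u * (v * del).
  by rewrite e addrK.
ring.
Qed.

Definition Bad : set Omega := [set w | forall b, ~ G b w].

Lemma Bad_meas : measurable Bad.
Proof.
have -> : Bad = \bigcap_b ~` G b.
  by apply/seteqP; split => w /=; [move=> h b _; exact: h|move=> h b; exact: h b I].
by apply: bigcapT_measurable => b; apply: measurableC; exact: G_meas.
Qed.

Lemma P_H n : P (H n) = ((1 - del) ^+ n)%:E.
Proof.
have := @incl_excl n n (fun _ => false) (leqnn n) (fun _ _ => erefl).
have -> : H n `&` X n (fun _ => false) = H n.
  by apply/seteqP; split => w /=; [case|move=> h; split => // b].
by rewrite big1 ?expr0 ?mulr1.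
Qed.

Lemma del_le1 : del <= 1.
Proof.
have : (0 <= P (H 1))%E := measure_ge0 P (H 1).
rewrite P_H expr1 lee_fin subr_ge0; exact.
Qed.

Lemma P_Bad : P Bad = 0.
Proof.
have sub : forall n : nat, (P Bad <= ((1 - del) ^+ n)%:E)%E.
  move=> n; rewrite -P_H; apply: le_measure; rewrite ?inE.
  - exact: Bad_meas.
  - exact: H_meas.
  - by move=> w /= h b _.
rewrite -[P Bad]fineK ?fin_num_measure //; last exact: Bad_meas.
congr (_%:E); apply/eqP; rewrite eq_le; apply/andP; split; last first.
  by rewrite -lee_fin fineK ?fin_num_measure ?measure_ge0 //; exact: Bad_meas.
rewrite leNgt; apply/negP => hp.
have hz : `|1 - del| < 1.
  rewrite ger0_norm ?subr_ge0 ?del_le1 //.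
  by rewrite ltrBlDr ltrDl del_gt0.
have := @cvgr_lt _ _ _ _ _ 0 (cvg_expr hz) _ hp; case=> N0 _ hN.
have := hN N0 (leqnn N0); rewrite /= => hlt.
have := sub N0; rewrite -[P Bad]fineK ?fin_num_measure ?lee_fin; last exact: Bad_meas.
by move=> hle; move: (le_lt_trans hle hlt); rewrite ltxx.
done.
Qed.

End Prob.


Section Path.
Context (R : realType) (d : nat) (N : 'I_d -> 'I_d -> R -> R) (e0 : 'I_d)
  (g : R -> 'I_d -> R).
Hypothesis hN0 : forall a c, a != c -> N a c 0 = 0.
Hypothesis hmono : forall a c, a != c -> forall s t, 0 <= s -> s <= t -> N a c s <= N a c t.
Hypothesis hint : forall a c, a != c -> forall t, 0 <= t -> exists n : nat, N a c t = n%:R.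
Hypothesis hrc : forall a c, a != c -> forall t, 0 <= t -> N a c x @[x --> t^'+] --> N a c t.
Hypothesis hdiag : forall a t, N a a t = - \sum_(c < d | c != a) N a c t.

Definition isum (t : R) (j : 'I_d) (m : nat) : R :=
  \sum_(k < m) \sum_(i < d) g (k%:R * t / m%:R) i *
       (N i j ((k.+1)%:R * t / m%:R) - N i j (k%:R * t / m%:R)).
Hypothesis hg : forall t, 0 <= t -> forall j, isum t j m @[m --> \oo] --> g t j - (e0 == j)%:R.

Definition C t := \sum_(ac : 'I_d * 'I_d | ac.1 != ac.2) N ac.1 ac.2 t.
Definition Cn t := Num.truncn (C t).

Lemma C_nat t : 0 <= t -> C t \is a Num.nat.
Proof. move=> t0; apply: rpred_sum => ac hac; have [n ->] := hint hac t0; exact: natr_nat. Qed.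

Lemma CnE t : 0 <= t -> (Cn t)%:R = C t.
Proof. by move=> t0; rewrite /Cn (truncnK (C_nat t0)). Qed.

Lemma C_mono s t : 0 <= s -> s <= t -> C s <= C t.
Proof. move=> s0 st; apply: ler_sum => ac hac; exact: hmono. Qed.

Lemma Cn_mono s t : 0 <= s -> s <= t -> (Cn s <= Cn t)%N.
Proof. by move=> s0 st; apply: le_truncn; apply: C_mono. Qed.


Lemma Cn_lt s t : 0 <= t -> (Cn s < Cn t)%N -> s < t.
Proof.
move=> t0 h; rewrite ltNge; apply/negP => ts; move: h.
by rewrite ltnNge (Cn_mono t0 ts).
Qed.

Lemma C_level s t : 0 <= s -> s <= t -> Cn s = Cn t -> forall a c, N a c s = N a c t.
Proof.
move=> s0 st e.
have off : forall a c, a != c -> N a c s = N a c t.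
  have h : \sum_(ac : 'I_d * 'I_d | ac.1 != ac.2) (N ac.1 ac.2 t - N ac.1 ac.2 s) = 0.
    by rewrite sumrB -/(C t) -/(C s) -!CnE ?(le_trans s0 st) // e subrr.
  move=> a c ac; apply/eqP; rewrite eq_sym -subr_eq0; apply/eqP.
  apply: (psumr_eq0P (P := fun ac : 'I_d * 'I_d => ac.1 != ac.2)
     (F := fun ac => N ac.1 ac.2 t - N ac.1 ac.2 s) _ h (i := (a, c))) => //.
  by move=> [a' c'] /= h'; rewrite subr_ge0; apply: hmono.
move=> a c; case: (eqVneq a c) => [<-|]; last exact: off.
rewrite !hdiag; congr (- _); apply: eq_bigr => c' hc'; by apply: off; rewrite eq_sym.
Qed.

Lemma Cn0 : Cn 0 = 0%N.
Proof. by rewrite /Cn /C big1 ?truncn0 // => ac; apply: hN0. Qed.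

Lemma C_rc t : 0 <= t -> exists2 e, 0 < e & forall x, t < x < t + e -> Cn x = Cn t.
Proof.
move=> t0.
have cv : C x @[x --> t^'+] --> C t.
  apply: (@cvg_big R _ +%R 0 (fun ac : 'I_d * 'I_d => ac.1 != ac.2) add_continuous).
  by move=> ac hac; exact: hrc.
have near1 : \forall x \near t^'+, Cn x == Cn t.
  move/cvgrPdist_lt : cv => /(_ 1 ltr01) h.
  near=> x.
  have xt : t < x by near: x; exact: nbhs_right_gt.
  have /= hx : `|C t - C x| < 1 by near: x; exact: h.
  have x0 : 0 <= x by apply: le_trans (ltW xt).
  have le1 := Cn_mono t0 (ltW xt).
  have : ((Cn x)%:R - (Cn t)%:R : R) < 1.
    rewrite !CnE //; apply: le_lt_trans hx; rewrite distrC; exact: ler_norm.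
  rewrite -natrB // -[1]/(1%:R : R) ltr_nat => h1.
  by rewrite eqn_leq le1 andbT -subn_eq0; rewrite ltnS leqn0 in h1.
have [_ h] := not_near_at_rightP t (fun x => Cn x == Cn t).
apply: contrapT => hn; apply: (h _ near1) => e.
apply: contrapT => hne; apply: hn; exists e%:num => // x hx.
apply/eqP; apply: contrapT => nP; apply: hne; exists x => //.
Unshelve. all: by end_near.
Qed.

Definition present (l : nat) := exists s, 0 <= s /\ Cn s = l.
Definition spt (l : nat) := xget 0 [set s | 0 <= s /\ Cn s = l].
Lemma spt_prop l : present l -> 0 <= spt l /\ Cn (spt l) = l.
Proof. by move=> h; apply: (xgetPex 0 h). Qed.
Definition Nbar l a c := N a c (spt l).
Lemma Nbar_eq s a c : 0 <= s -> Nbar (Cn s) a c = N a c s.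
Proof.
move=> s0; have [p0 pe] := spt_prop (ex_intro _ s (conj s0 erefl)).
rewrite /Nbar; case: (leP (spt (Cn s)) s) => h.
- by apply: C_level.
- by symmetry; apply: C_level => //; exact: ltW.
Qed.

Definition e0v : 'I_d -> R := fun j => (e0 == j)%:R.
Definition upd (W : 'I_d -> R) (D : 'I_d -> 'I_d -> R) : 'I_d -> R :=
  fun j => W j + \sum_i W i * D i j.
Fixpoint st (l : nat) : ('I_d -> R) * nat :=
  match l with
  | 0 => (e0v, 0%N)
  | l'.+1 => let p := st l' in
     if `[< present l'.+1 >] then (upd p.1 (fun a c => Nbar l'.+1 a c - Nbar p.2 a c), l'.+1)
     else p
  end.
Definition Wv l := (st l).1.

Lemma st_present l : present l -> (st l).2 = l.
Proof. by case: l => [//|l] pl; rewrite /= asboolT. Qed.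

Lemma st_skip l k : (l <= k)%N -> (forall k', (l < k' <= k)%N -> ~ present k') -> st k = st l.
Proof.
elim: k => [|k IH] hl hnp; first by rewrite leqn0 in hl; rewrite (eqP hl).
case: (eqVneq l k.+1) => [->//|nl].
have lk : (l <= k)%N by rewrite leq_eqVlt (negbTE nl) /= in hl.
rewrite /= asboolF; last by apply: hnp; rewrite ltnS lk leqnn.
apply: IH => // k' /andP[h1 h2]; apply: hnp; rewrite h1 /=; exact: leqW.
Qed.

Lemma key l l' : present l -> present l' -> (l < l')%N ->
  (forall k, (l < k < l')%N -> ~ present k) ->
  Wv l' = upd (Wv l) (fun a c => Nbar l' a c - Nbar l a c).
Proof.
case: l' => [//|l'] pl pl' ll hnp.
have e : st l' = st l.
  apply: st_skip; first by rewrite -ltnS.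
  move=> k /andP[h1 h2]; apply: hnp; rewrite h1 /=; by rewrite ltnS.
by rewrite /Wv /= asboolT // e st_present.
Qed.

Lemma mesh c : exists2 del, 0 < del & forall l, (l < c)%N -> present l ->
  forall x, spt l < x < spt l + del -> Cn x = l.
Proof.
elim: c => [|c [del d0 IH]]; first by exists 1.
case: (pselect (present c)) => pc.
- have [p0 pe] := spt_prop pc; have [e e0' He] := C_rc p0.
  exists (Num.min del e); first by rewrite lt_min d0 e0'.
  move=> l; rewrite ltnS leq_eqVlt => /orP [/eqP ->|lc] pl x /andP[h1 h2].
  + rewrite -pe; apply: He; rewrite h1 /=; apply: lt_le_trans h2 _.
    by rewrite lerD2l ge_min lexx orbT.
  + apply: IH => //; rewrite h1 /=; apply: lt_le_trans h2 _.
    by rewrite lerD2l ge_min lexx.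
- exists del => // l; rewrite ltnS leq_eqVlt => /orP [/eqP ->|lc] pl //.
  exact: IH.
Qed.

Lemma main_step t : 0 <= t ->
  (forall s, 0 <= s -> (Cn s < Cn t)%N -> g s = Wv (Cn s)) -> g t = Wv (Cn t).
Proof.
move=> t0 IH.
have [del d0 Hm] := mesh (Cn t).
have nb : forall u v, 0 <= u -> u <= v -> v <= t -> v - u < del ->
    forall l, (Cn u < l < Cn v)%N -> ~ present l.
  move=> u v u0 uv vt vu l /andP[h1 h2] pl.
  have [p0 pe] := spt_prop pl.
  have lt : (l < Cn t)%N := leq_trans h2 (Cn_mono (le_trans u0 uv) vt).
  have us : u < spt l by apply: Cn_lt => //; rewrite pe.
  have sv : spt l < v by apply: Cn_lt; [exact: le_trans u0 uv| rewrite pe].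
  have := Hm l lt pl v; rewrite sv /= => H.
  have : Cn v = l.
    apply: H; rewrite -ltrBlDl; apply: le_lt_trans vu.
    by rewrite lerD2l lerN2 ltW.
  by move=> e; rewrite e ltnn in h2.
pose m0 := (Num.truncn (t / del)).+1.
have hm : forall m, (m0 <= m)%N -> t / m%:R < del.
  move=> m hm.
  have mp : 0 < m%:R :> R by rewrite ltr0n; exact: leq_trans (ltn0Sn _) hm.
  rewrite ltr_pdivrMr //.
  have h1 : t / del < m%:R.
    apply: lt_le_trans (truncnS_gt _) _; rewrite ler_nat; exact: hm.
  by move: h1; rewrite ltr_pdivrMr // mulrC.
have sumE : forall m, (m0 <= m)%N -> forall j, isum t j m = Wv (Cn t) j - e0v j.
  move=> m hmm j; have m0' : (0 < m)%N := leq_trans (ltn0Sn _) hmm.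
  pose x := fun k : nat => k%:R * t / m%:R.
  have mpos : 0 < m%:R :> R by rewrite ltr0n.
  have x0 : forall k, 0 <= x k.
    by move=> k; rewrite /x divr_ge0 ?mulr_ge0 ?ler0n // ltW.
  have xle : forall k, (k <= m)%N -> x k <= t.
    move=> k km; rewrite /x ler_pdivrMr // mulrC; apply: ler_wpM2l => //.
    by rewrite ler_nat.
  have xS : forall k, x k.+1 - x k = t / m%:R.
    by move=> k; rewrite /x -mulrBl -mulrBl mulrSr addrAC subrr add0r mul1r.
  have xm : x m = t by rewrite /x mulrAC divff ?mul1r // gt_eqF.
  have x00 : x 0%N = 0 by rewrite /x !mul0r.
  have -> : isum t j m = \sum_(0 <= k < m)
       \sum_(i < d) g (x k) i * (N i j (x k.+1) - N i j (x k)).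
    by rewrite /isum big_mkord.
  rewrite (telescope_sumr_eq (fun k => Wv (Cn (x k)) j)) //; last first.
    move=> k /andP[_ km].
    have u0 := x0 k; have uv : x k <= x k.+1 by rewrite -subr_ge0 xS divr_ge0 // ltW.
    have vt := xle _ km.
    case: (eqVneq (Cn (x k)) (Cn (x k.+1))) => e.
    + rewrite e subrr big1 // => i _.
      by rewrite (C_level u0 uv e) subrr mulr0.
    + have lt : (Cn (x k) < Cn (x k.+1))%N by rewrite ltn_neqAle e Cn_mono.
      have ltt : (Cn (x k) < Cn t)%N := leq_trans lt (Cn_mono (le_trans u0 uv) vt).
      rewrite (IH _ u0 ltt).
      rewrite (@key (Cn (x k)) (Cn (x k.+1))) //; last first.
        apply: nb => //; by rewrite xS hm.
        by exists (x k.+1); split => //; exact: le_trans uv.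
        by exists (x k).
      rewrite /upd (addrC (Wv _ j)) addrK; apply: eq_bigr => i _.
      by rewrite !Nbar_eq //; exact: le_trans uv.
  by rewrite xm x00 Cn0.
apply: funext => j.
have c1 : isum t j m @[m --> \oo] --> g t j - (e0 == j)%:R := @hg t t0 j.
have c2 : isum t j m @[m --> \oo] --> Wv (Cn t) j - e0v j.
  by apply: cvg_near_cst; exists m0 => // m hmm; exact: sumE.
have := @cvg_unique _ (@Rhausdorff R) _ _ _ _ c1 c2; rewrite /e0v => H; have := congr1 (fun z => z + (e0 == j)%:R) (H (fmap_proper_filter _ _)); rewrite /= !subrK; exact.
Qed.

Lemma main t : 0 <= t -> g t = Wv (Cn t).
Proof.
move=> t0; move: {2}(Cn t) (leqnn (Cn t)) => c; elim: c t t0 => [|c IH] t t0 hc.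
- by apply: main_step => // s s0; rewrite leqn0 in hc; rewrite (eqP hc).
- apply: main_step => // s s0 hs; apply: IH => //; rewrite -ltnS.
  exact: leq_trans hs hc.
Qed.

Lemma rowsum s i : \sum_j N i j s = 0.
Proof. by rewrite (bigD1 i) //= hdiag addNr. Qed.

Lemma upd_sum W D : (forall i, \sum_j D i j = 0) -> \sum_j upd W D j = \sum_j W j.
Proof.
move=> hD; rewrite big_split /= [X in _ + X]exchange_big /= [X in _ + X]big1 ?addr0 // => i _.
by rewrite -mulr_sumr hD mulr0.
Qed.

Lemma Wv_sum l : \sum_j Wv l j = 1.
Proof.
rewrite /Wv; elim: l => [|l IH] /=.
- rewrite (bigD1 e0) //= /e0v eqxx big1 ?addr0 // => j /negbTE.
  by rewrite eq_sym => ->.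
- case: asboolP => _ //; rewrite upd_sum // => i.
  by rewrite sumrB /Nbar !rowsum subrr.
Qed.

Lemma jump u v : 0 <= u -> u <= v -> (Cn v <= (Cn u).+1)%N ->
  g v = upd (g u) (fun a c => N a c v - N a c u).
Proof.
move=> u0 uv hc; have v0 := le_trans u0 uv.
rewrite !main //.
case: (eqVneq (Cn u) (Cn v)) => e.
- rewrite -e; apply: funext => j; rewrite /upd big1 ?addr0 // => i _.
  by rewrite (C_level u0 uv e) subrr mulr0.
- have lt : (Cn u < Cn v)%N by rewrite ltn_neqAle e Cn_mono.
  rewrite (@key (Cn u) (Cn v)) //.
  + by apply: funext => j; rewrite /upd; congr (_ + _); apply: eq_bigr => i _;
      rewrite !Nbar_eq.
  + by exists u.
  + by exists v.
  + move=> k /andP[h1 h2]; exfalso.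
    have : (Cn v = (Cn u).+1)%N by apply/eqP; rewrite eqn_leq hc lt.
    by move=> ev; rewrite ev ltnS in h2; rewrite ltnNge h2 in h1.
Qed.

Context (L : 'M[R]_d) (q : seq ('I_d * 'I_d)) (b : nat).
Hypothesis hq : all (goode L) q.
Hypothesis hG : forall j, (j < size q)%N -> forall a c, a != c ->
  N a c ((b * size q + j).+1)%:R - N a c (b * size q + j)%:R = (pat q j a c)%:R.

Definition yt (j : nat) : R := (b * size q + j)%:R.
Arguments yt : simpl never.

Lemma yt0 j : 0 <= yt j. Proof. by rewrite /yt ler0n. Qed.
Lemma ytS j : yt j <= yt j.+1. Proof. by rewrite /yt ler_nat addnS. Qed.

Lemma e_off j : (j < size q)%N -> (nth (e0, e0) q j).1 != (nth (e0, e0) q j).2.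
Proof. by move=> hj; have /andP[] := (allP hq) _ (mem_nth (e0, e0) hj). Qed.

Lemma sum_pair (e : 'I_d * 'I_d) y : e.1 != e.2 ->
  \sum_(c < d | c != y) (((y, c) == e)%:R : R) = ((y == e.1)%:R).
Proof.
case: e => u v /= uv; case: (eqVneq y u) => [->|nyu].
- rewrite (bigD1 v) 1?eq_sym //= eqxx big1 ?addr0 // => c /andP[_ cv].
  by rewrite xpair_eqE eqxx (negbTE cv).
- by rewrite big1 // => c _; rewrite xpair_eqE (negbTE nyu).
Qed.

Lemma D_eq j : (j < size q)%N -> forall y l,
  N y l (yt j.+1) - N y l (yt j) =
  if y == l then - ((y == (nth (e0, e0) q j).1)%:R)
  else ((y, l) == nth (e0, e0) q j)%:R.
Proof.
move=> hj y l; have off := e_off hj.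
have hG' : forall a c, a != c -> N a c (yt j.+1) - N a c (yt j) =
    ((a, c) == nth (e0, e0) q j)%:R.
  move=> a c ac; rewrite /yt addnS hG // /pat.
  by rewrite (set_nth_default (e0, e0) (a, a) hj).
case: (eqVneq y l) => [<-|ne]; last exact: hG'.
rewrite !hdiag opprK addrC -sumrB -(sum_pair y off) -sumrN.
by apply: eq_bigr => c cy; rewrite -hG' 1?eq_sym // opprB.
Qed.

Lemma Cstep j : (j < size q)%N -> Cn (yt j.+1) = (Cn (yt j)).+1.
Proof.
move=> hj; apply/eqP; rewrite -(eqr_nat R) (CnE (yt0 _)) mulrSr.
rewrite (CnE (yt0 _)) [C _ + 1]addrC -subr_eq /C -sumrB.
have -> : \sum_(ac : 'I_d * 'I_d | ac.1 != ac.2) (N ac.1 ac.2 (yt j.+1) - N ac.1 ac.2 (yt j))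
   = \sum_(ac : 'I_d * 'I_d | ac.1 != ac.2) ((ac == nth (e0, e0) q j)%:R : R).
  apply: eq_bigr => -[a c] ac; rewrite /= in ac.
  by rewrite [LHS]D_eq // (negbTE ac).
rewrite (bigD1 (nth (e0, e0) q j)); last exact: e_off.
rewrite eqxx big1 => [|ac /andP[_ h]]; last by rewrite (negbTE h).
by rewrite /= addr0.
Qed.

Lemma gstep j : (j < size q)%N ->
  g (yt j.+1) = upd (g (yt j)) (fun a c => N a c (yt j.+1) - N a c (yt j)).
Proof. by move=> hj; apply: jump; [exact: yt0|exact: ytS|rewrite Cstep]. Qed.

Lemma point_id (u0 v0 y l : 'I_d) : u0 != v0 ->
  ((y == l)%:R + (if y == l then - ((y == u0)%:R) else ((y, l) == (u0, v0))%:R) : R)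
  = (stepe (u0, v0) y == l)%:R.
Proof.
move=> uv; rewrite /stepe /=.
case: (eqVneq y l) => [<-|ne]; case: (eqVneq y u0) => [->|nu] /=.
- by rewrite subrr eq_sym (negbTE uv).
- by rewrite subr0 eqxx.
- by rewrite xpair_eqE eqxx /= add0r; case: eqVneq.
- by rewrite xpair_eqE (negbTE nu) (negbTE ne) addr0.
Qed.

Lemma sig_rcons (s : seq ('I_d * 'I_d)) e x : sig (rcons s e) x = stepe e (sig s x).
Proof. by rewrite -cats1 sig_cat. Qed.

Lemma block_lin j : (j <= size q)%N -> forall l,
  g (yt j) l = \sum_x g (yt 0) x * ((sig (take j q) x == l)%:R).
Proof.
elim: j => [|j IH] hj l.
  rewrite take0 (bigD1 l) //= eqxx mulr1 big1 ?addr0 // => x xl.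
  by rewrite (negbTE xl) mulr0.
have hj' : (j < size q)%N := hj.
have IHj := IH (ltnW hj').
rewrite (gstep hj') /upd /= IHj.
under eq_bigr => i _ do rewrite IHj mulr_suml.
rewrite exchange_big -big_split.
rewrite (take_nth (e0, e0) hj'); apply: eq_bigr => x _.
rewrite sig_rcons.
have -> : \sum_(i < d) g (yt 0) x * (sig (take j q) x == i)%:R *
      (N i l (yt j.+1) - N i l (yt j))
    = g (yt 0) x * (N (sig (take j q) x) l (yt j.+1) - N (sig (take j q) x) l (yt j)).
  rewrite (bigD1 (sig (take j q) x)) //= eqxx mulr1 big1 ?addr0 // => i hi.
  by rewrite eq_sym (negbTE hi) mulr0 mul0r.
rewrite /= -mulrDr D_eq //.
case E : (nth (e0, e0) q j) => [u0 v0]; congr (_ * _).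
by rewrite point_id //; have := e_off hj'; rewrite E.
Qed.

Lemma block_final (hconst : forall x y, sig q x = sig q y) r0 l :
  g (yt (size q)) l = (sig q r0 == l)%:R.
Proof.
rewrite block_lin // take_size.
have e : forall x, sig q x = sig q r0 by move=> x; apply: hconst.
under eq_bigr => x _ do rewrite e.
rewrite -mulr_suml.
have -> : \sum_x g (yt 0) x = 1 by rewrite (main (yt0 0)) Wv_sum.
by rewrite mul1r.
Qed.

End Path.

Unset Implicit Arguments.

Theorem lemma2p2 (R : realType) (dm : measure_display)
    (Omega : measurableType dm) (P : probability Omega R) (d : nat)
    (a : 'I_d -> R) (L : 'M[R]_d) (N : 'I_d -> 'I_d -> R -> Omega -> R)
    (eta0 eta0' : Omega -> 'I_d) (eta eta' : R -> Omega -> 'I_d -> R) :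
  injective a ->
  intensity_matrix L ->
  ergodic_intensity L ->
  (forall i j : 'I_d, i != j -> poisson_process P (L i j) (N i j)) ->
  (forall (i : 'I_d) t w, N i i t w = - \sum_(j < d | j != i) N i j t w) ->
  (forall i : 'I_d, measurable [set w | eta0 w = i]) ->
  (forall i : 'I_d, measurable [set w | eta0' w = i]) ->
  joint_indep P N eta0 eta0' ->
  solves_ito P N eta0 eta ->
  solves_ito P N eta0' eta' ->
  {ae P, forall w,
    (fun n : nat =>
       if (n%:R%:E <= meet_time (state_proc a eta) (state_proc a eta') w)%E
       then 1 else 0 : R) @ \oo --> 0}.
Proof.
move=> ainj HL herg hpois hdiag m0 m0' hind hsol hsol'.
have hr := ergodic_reach HL herg.
have [q [gq hq]] := coalesce hr (enum 'I_d).
have hconst : forall x y, sig q x = sig q y by move=> x y; apply: hq; rewrite mem_enum.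
have hB : {ae P, forall w, ~ Bad N q w}.
  exists (Bad N q); split.
  - exact: Bad_meas hpois.
  - exact: P_Bad hpois hind gq.
  - by move=> w /= nnB; apply: contrapT.
rewrite /solves_ito in hsol hsol'.
move: hsol hsol' hB; apply: filterS3 => w hs1 hs2 hnb.
have [b Gb] : exists b, G N q b w.
  by apply: contrapT => h; apply: hnb => b Gbw; apply: h; exists b.
have hG : forall j, (j < size q)%N -> forall a c, a != c ->
    N a c ((b * size q + j).+1)%:R w - N a c (b * size q + j)%:R w = (pat q j a c)%:R.
  move=> j hj a' c ac; have := Gb j hj a' c ac; rewrite /ev /=.
  by rewrite modnMDl modn_small.
have hN0 : forall a c, a != c -> N a c 0 w = 0.
  by move=> a' c ac; have [_ [h _ _ _ _]] := hpois a' c ac; exact: h.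
have hmono : forall a c, a != c -> forall s t, 0 <= s -> s <= t -> N a c s w <= N a c t w.
  by move=> a' c ac; have [_ [_ h _ _ _]] := hpois a' c ac; exact: h.
have hint : forall a c, a != c -> forall t, 0 <= t -> exists n : nat, N a c t w = n%:R.
  by move=> a' c ac; have [_ [_ _ h _ _]] := hpois a' c ac; exact: h.
have hrc : forall a c, a != c -> forall t, 0 <= t ->
    N a c x w @[x --> t^'+] --> N a c t w.
  by move=> a' c ac; have [_ [_ _ _ h _]] := hpois a' c ac; exact: h.
have hd : forall a t, N a a t w = - \sum_(c < d | c != a) N a c t w.
  by move=> a' t; exact: hdiag.
have f1 := block_final (N := fun a c t => N a c t w) (g := fun t => eta t w)
  hN0 hmono hint hrc hd hs1 gq hG hconst (eta0 w).
have f2 := block_final (N := fun a c t => N a c t w) (g := fun t => eta' t w)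
  hN0 hmono hint hrc hd hs2 gq hG hconst (eta0 w).
set T := yt R q b (size q) in f1 f2.
have hmt : (meet_time (state_proc a eta) (state_proc a eta') w <= T%:E)%E.
  apply: ereal_inf_lbound; exists T => //; split; first by rewrite /T /yt ler0n.
  by rewrite /state_proc; apply: eq_bigr => i _; rewrite f1 f2.
apply: cvg_near_cst; exists (b * size q + size q).+1 => // n hn /=.
case: ifPn => // hle; exfalso.
have := le_trans hle hmt.
by rewrite lee_fin /T /yt ler_nat leqNgt hn.
Qed.
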